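(* Let $\mathbf{a}=(a_n)_{n\geq 1}$ be a strong divisibility sequence. Then for every positive integer $n$, \[\mathrm{lcm}(a_1,a_2,\dots,a_n)=\mathrm{lcm}\left\{a_1\binom{n}{1}_{\mathbf{a}},a_2\binom{n}{2}_{\mathbf{a}},\dots,a_n\binom{n}{n}_{\mathbf{a}}\right\}.\]
   Context: A strong divisibility sequence is a sequence of positive integers $(a_n)_{n\geq1}$ such that $\gcd(a_n,a_m)=a_{\gcd(n,m)}$ for all positive integers $n,m$. For integers $0\leq k\leq n$, the $\mathbf{a}$-binomial coefficient is $\binom{n}{k}_{\mathbf{a}}:=\frac{a_na_{n-1}\cdots a_{n-k+1}}{a_1a_2\cdots a_k}$ (empty products equal $1$); for a strong divisibility sequence these are positive integers. *)

(* Defs.v *)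
From mathcomp Require Import all_boot.
Set Implicit Arguments. Unset Strict Implicit. Unset Printing Implicit Defensive.

(* A sequence (a_n)_{n>=1} is represented as a : nat -> nat; the value a 0 is
   irrelevant and never used. *)
Definition strong_div_seq (a : nat -> nat) : Prop :=
  (forall n, 0 < n -> 0 < a n) /\
  (forall n m, 0 < n -> 0 < m -> gcdn (a n) (a m) = a (gcdn n m)).

(* a-binomial coefficient: (a_n a_{n-1} ... a_{n-k+1}) / (a_1 a_2 ... a_k).
   For a strong divisibility sequence the division is exact (paper's claim). *)
Definition abinom (a : nat -> nat) (n k : nat) : nat :=
  (\prod_(0 <= i < k) a (n - i)) %/ (\prod_(1 <= i < k.+1) a i).

Definition lcm_range (n : nat) (f : nat -> nat) : nat :=
  \big[lcmn/1]_(1 <= i < n.+1) f i.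

(* Main.v *)
Require Import Defs.
From mathcomp Require Import all_boot zify.

Lemma sum_le_min v B : \sum_(1 <= e < B.+1) (e <= v) = minn v B.
Proof.
elim: B => [|B IH]; first by rewrite big_geq // minn0.
rewrite big_nat_recr //= IH; case: (leqP B.+1 v) => H /=; lia.
Qed.

Lemma cnt1 r N : 0 < r -> \sum_(1 <= i < N.+1) (r %| i) = N %/ r.
Proof.
move=> r0; elim: N => [|N IH]; first by rewrite big_geq // div0n.
by rewrite big_nat_recr //= IH divnS // addnC.
Qed.

Lemma cnt2 r n k : 0 < r -> k <= n ->
  \sum_(0 <= i < k) (r %| n - i) + (n - k) %/ r = n %/ r.
Proof.
move=> r0; elim: k => [|k IH] kn; first by rewrite big_geq // subn0.
rewrite big_nat_recr //= -IH; last by lia.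
have -> : n - k = (n - k.+1).+1 by lia.
rewrite divnS //; lia.
Qed.

Lemma arith r n k : 0 < r -> k <= n ->
  k %/ r <= n %/ r - (n - k) %/ r /\
  (r %| k) + (n %/ r - (n - k) %/ r) <= 1 + k %/ r.
Proof.
move=> r0 kn.
have E : n = k + (n - k) by lia.
have := divnD k (n - k) r0; rewrite -E => ->.
have H1 := ltn_pmod k r0; have H2 := ltn_pmod (n - k) r0.
set x := k %/ r; set y := (n - k) %/ r.
have H3 : (r %| k) -> (r <= k %% r + (n - k) %% r) = false.
  move=> Hd; have km : k %% r = 0 by apply/eqP.
  by rewrite km add0n leqNgt H2.
move: H3; case: (r %| k); case: (r <= _) => //= H; split; lia.
Qed.

Lemma key (D : pred nat) (n k : nat) (b : bool) :
  (forall m t, 0 < m -> 0 < t -> D m -> D (m * t)) ->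
  (forall m1 m2, 0 < m1 -> 0 < m2 -> D m1 -> D m2 -> D (gcdn m1 m2)) ->
  (forall m, 0 < m -> m <= n -> D m -> b) ->
  0 < k -> k <= n ->
  (\sum_(1 <= i < k.+1) D i <= \sum_(0 <= i < k) D (n - i)) /\
  (D k + \sum_(0 <= i < k) D (n - i) <= b + \sum_(1 <= i < k.+1) D i).
Proof.
move=> Dmul Dgcd Db k0 kn.
case: (boolP (has D (iota 1 n))) => [/hasP [m] | /hasPn HN].
  rewrite mem_iota => /andP [m0 mn] Dm.
  have -> : b by apply: (Db m) => //; lia.
  have ex : exists m, (0 < m) && D m by exists m; rewrite m0.
  case: (ex_minnP ex) => r /andP [r0 Dr] rmin.
  have DE : forall m, 0 < m -> D m = (r %| m).
    move=> x x0; apply/idP/idP => [Dx | /dvdnP [t Ht]].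
      have g0 : 0 < gcdn r x by rewrite gcdn_gt0 r0.
      have Dg := Dgcd r x r0 x0 Dr Dx.
      have := rmin (gcdn r x); rewrite g0 Dg => /(_ isT) Hle.
      have Hge : gcdn r x <= r by apply: dvdn_leq => //; apply: dvdn_gcdl.
      have Heq : gcdn r x = r by apply/eqP; rewrite eqn_leq Hge Hle.
      by apply/gcdn_idPl.
    rewrite Ht mulnC; apply: Dmul => //.
    by move: x0; rewrite Ht muln_gt0 => /andP [].
  rewrite [D k](DE k k0).
  rewrite (eq_big_nat _ _ (F1 := fun i => nat_of_bool (D i)) (F2 := fun i => nat_of_bool (r %| i))); last first.
    by move=> i /andP [i1 _]; rewrite (DE i i1).
  rewrite (eq_big_nat _ _ (F1 := fun i => nat_of_bool (D (n - i))) (F2 := fun i => nat_of_bool (r %| n - i))); last first.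
    move=> i /andP [_ ik]; have Hi : 0 < n - i by lia. 
    by congr nat_of_bool; apply: DE.
  rewrite cnt1 //.
  have C2 := @cnt2 r n k r0 kn.
  have [A1 A2] := @arith r n k r0 kn.
  split; lia.
have Dz : forall i, 0 < i -> i <= n -> D i = false.
  by move=> i i0 i1; apply/negbTE/HN; rewrite mem_iota; lia.
have S1 : \sum_(1 <= i < k.+1) D i = 0.
  apply: big1_seq => i /andP [_]; rewrite mem_index_iota => Hi.
  by rewrite Dz //; lia.
have S2 : \sum_(0 <= i < k) D (n - i) = 0.
  apply: big1_seq => i /andP [_]; rewrite mem_index_iota => Hi.
  by rewrite Dz //; lia.
by rewrite S1 S2 (Dz k).
Qed.

Lemma prod_pos (r : seq nat) (F : nat -> nat) :
  (forall i, i \in r -> 0 < F i) -> 0 < \prod_(i <- r) F i.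
Proof.
elim: r => [|x r IH] H; first by rewrite big_nil.
rewrite big_cons muln_gt0 H ?mem_head //= IH // => i ir.
by apply: H; rewrite in_cons ir orbT.
Qed.

Lemma logn_prod p (r : seq nat) (F : nat -> nat) :
  (forall i, i \in r -> 0 < F i) ->
  logn p (\prod_(i <- r) F i) = \sum_(i <- r) logn p (F i).
Proof.
elim: r => [|x r IH] H; first by rewrite !big_nil logn1.
have H' : forall i, i \in r -> 0 < F i.
  by move=> i ir; apply: H; rewrite in_cons ir orbT.
rewrite !big_cons lognM ?H ?mem_head ?prod_pos // IH //.
Qed.

Lemma term_le (r : seq nat) (f : nat -> nat) i :
  i \in r -> f i <= \sum_(j <- r) f j.
Proof.
elim: r => [|x r IH] //; rewrite in_cons big_cons => /orP [/eqP -> | ir].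
  exact: leq_addr.
by apply: leq_trans (IH ir) _; apply: leq_addl.
Qed.

Lemma log_sum p x B : prime p -> 0 < x -> logn p x <= B ->
  logn p x = \sum_(1 <= e < B.+1) (p ^ e %| x).
Proof.
move=> pp x0 xB.
rewrite (eq_big_nat _ _ (F1 := fun e => nat_of_bool (p ^ e %| x))
   (F2 := fun e => nat_of_bool (e <= logn p x))); last first.
  by move=> e _; rewrite pfactor_dvdn.
by rewrite sum_le_min; symmetry; apply/minn_idPl.
Qed.

Lemma dvd_of_log x y : 0 < x -> 0 < y ->
  (forall p, prime p -> logn p x <= logn p y) -> x %| y.
Proof.
move=> x0 y0 H; apply/dvdn_partP => // p; rewrite mem_primes => /and3P [pp _ _].
by rewrite p_part pfactor_dvdn // H.
Qed.

Lemma lcm_dvd n f d : (forall i, 0 < i -> i <= n -> f i %| d) -> lcm_range n f %| d.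
Proof.
rewrite /lcm_range; elim: n => [|n IH] H; first by rewrite big_geq.
rewrite big_nat_recr //= dvdn_lcm H // andbT; apply: IH => i i0 i1; apply: H => //.
exact: leqW.
Qed.

Lemma dvd_lcm n f i : 0 < i -> i <= n -> f i %| lcm_range n f.
Proof.
rewrite /lcm_range; elim: n => [|n IH] i0 iN; first by lia.
rewrite big_nat_recr //=; case: (ltngtP i n.+1) => H.
- by apply: dvdn_trans (IH _ _) (dvdn_lcml _ _).
- by lia.
- by rewrite H dvdn_lcmr.
Qed.

Lemma lcm_gt0 n f : (forall i, 0 < i -> i <= n -> 0 < f i) -> 0 < lcm_range n f.
Proof.
rewrite /lcm_range; elim: n => [|n IH] H; first by rewrite big_geq.
rewrite big_nat_recr //= lcmn_gt0 H // andbT; apply: IH => i i0 i1; apply: H => //.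
exact: leqW.
Qed.

Lemma main_k (a : nat -> nat) (n k : nat) :
  strong_div_seq a -> 0 < k -> k <= n ->
  let P := \prod_(0 <= i < k) a (n - i) in
  let Q := \prod_(1 <= i < k.+1) a i in
  let L := lcm_range n a in
  (Q %| P) /\ (a k * P %| L * Q).
Proof.
move=> [apos agcd] k0 kn P Q L.
have Ppos : 0 < P.
  by apply: prod_pos => i; rewrite mem_index_iota => Hi; apply: apos; lia.
have Qpos : 0 < Q.
  by apply: prod_pos => i; rewrite mem_index_iota => Hi; apply: apos; lia.
have Lpos : 0 < L by apply: lcm_gt0 => i i0 _; apply: apos.
have akpos : 0 < a k by apply: apos.
have Dmul : forall d m t, 0 < m -> 0 < t -> d %| a m -> d %| a (m * t).
  move=> d m t m0 t0 H; apply: dvdn_trans H _.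
  have -> : a m = gcdn (a m) (a (m * t)).
    rewrite agcd ?muln_gt0 ?m0 //; congr a; symmetry; apply/gcdn_idPl; exact: dvdn_mulr.
  exact: dvdn_gcdr.
have Dgcd : forall d m1 m2, 0 < m1 -> 0 < m2 -> d %| a m1 -> d %| a m2 -> d %| a (gcdn m1 m2).
  by move=> d m1 m2 m10 m20 H1 H2; rewrite -agcd // dvdn_gcd H1.
have logP : forall p, logn p P = \sum_(0 <= i < k) logn p (a (n - i)).
  by move=> p; apply: logn_prod => i; rewrite mem_index_iota => Hi; apply: apos; lia.
have logQ : forall p, logn p Q = \sum_(1 <= i < k.+1) logn p (a i).
  by move=> p; apply: logn_prod => i; rewrite mem_index_iota => Hi; apply: apos; lia.
have per_e : forall p e, prime p ->
   (\sum_(1 <= i < k.+1) (p ^ e %| a i) <= \sum_(0 <= i < k) (p ^ e %| a (n - i))) /\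
   ((p ^ e %| a k) + \sum_(0 <= i < k) (p ^ e %| a (n - i)) <=
      (e <= logn p L) + \sum_(1 <= i < k.+1) (p ^ e %| a i)).
  move=> p e pp.
  have := @key (fun m => p ^ e %| a m) n k (e <= logn p L).
  apply => //.
  - by move=> m t m0 t0 /= H; apply: Dmul.
  - by move=> m1 m2 m10 m20 /= H1 H2; apply: Dgcd.
  - move=> m m0 mn /= H; rewrite -pfactor_dvdn //; apply: dvdn_trans H _.
    exact: dvd_lcm.
have main : forall p, prime p ->
   logn p Q <= logn p P /\ logn p (a k) + logn p P <= logn p L + logn p Q.
  move=> p pp.
  set B := logn p P + logn p Q + logn p L + logn p (a k).
  have bP : forall i, i \in index_iota 0 k -> logn p (a (n - i)) <= B.
    move=> i Hi; apply: leq_trans (_ : logn p P <= B); last by rewrite /B; lia.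
    by rewrite logP; exact: (@term_le _ (fun j => logn p (a (n - j))) i Hi).
  have bQ : forall i, i \in index_iota 1 k.+1 -> logn p (a i) <= B.
    move=> i Hi; apply: leq_trans (_ : logn p Q <= B); last by rewrite /B; lia.
    by rewrite logQ; exact: (@term_le _ (fun j => logn p (a j)) i Hi).
  have EP : logn p P = \sum_(1 <= e < B.+1) \sum_(0 <= i < k) (p ^ e %| a (n - i)).
    rewrite exchange_big logP; apply: eq_big_seq => i Hi.
    apply: log_sum => //; last exact: bP.
    by apply: apos; move: Hi; rewrite mem_index_iota; lia.
  have EQ : logn p Q = \sum_(1 <= e < B.+1) \sum_(1 <= i < k.+1) (p ^ e %| a i).
    rewrite exchange_big logQ; apply: eq_big_seq => i Hi.
    apply: log_sum => //; last exact: bQ.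
    by apply: apos; move: Hi; rewrite mem_index_iota; lia.
  have EK : logn p (a k) = \sum_(1 <= e < B.+1) (p ^ e %| a k).
    by apply: log_sum => //; rewrite /B; lia.
  have EL : logn p L = \sum_(1 <= e < B.+1) (e <= logn p L).
    by rewrite sum_le_min; symmetry; apply/minn_idPl; rewrite /B; lia.
  split.
    by rewrite EP EQ; apply: leq_sum => e _; case: (per_e p e pp).
  rewrite EK EP EQ [X in _ <= X + _]EL -!big_split /=.
  by apply: leq_sum => e _; case: (per_e p e pp).
split.
  by apply: dvd_of_log => // p pp; case: (main p pp).
apply: dvd_of_log; rewrite ?muln_gt0 ?akpos ?Ppos ?Lpos ?Qpos // => p pp.
rewrite !lognM //; by case: (main p pp).
Qed.

Theorem corollary1 (a : nat -> nat) (n : nat) :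
  strong_div_seq a -> 0 < n ->
  lcm_range n a = lcm_range n (fun k => a k * abinom a n k).
Proof.
move=> Hs n0; apply/eqP; rewrite eqn_dvd; apply/andP; split.
  apply: lcm_dvd => i i0 iN; apply: dvdn_trans (@dvd_lcm n (fun k => a k * abinom a n k) i i0 iN).
  exact: dvdn_mulr.
apply: lcm_dvd => k k0 kn.
have [QP H] := @main_k a n k Hs k0 kn.
move: QP H; rewrite /abinom.
set P := \prod_(0 <= i < k) a (n - i).
set Q := \prod_(1 <= i < k.+1) a i => QP H.
have Qpos : 0 < Q.
  by apply: prod_pos => i; rewrite mem_index_iota => Hi; case: Hs => apos _; apply: apos; lia.
rewrite -(dvdn_pmul2r Qpos) -mulnA divnK //.
Qed.
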